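(* Let $p\ge1$, assume $\mathrm{diam}(\mathcal X)\le C_{\mathcal X}$, $\mathrm{diam}(\mathcal Y)\le C_{\mathcal Y}$, and let $C_1,C_2$ satisfy the requirements of the GOSPA1 and GOSPA2 definitions (including, if $p>1$, the condition on $d_{\mathcal Y}$ for GOSPA2). Then for all graphs in $\mathbb G$: (a) $d_{\mathbb G,R_1}(([n],v,e),([n],w,f))=d_{\mathbb G,R_2}(([n],v,e),([n],w,f))$ for graphs of equal size $n$; (b) if $C_1^p\le C_2^p-\frac12C_{\mathcal Y}^p$, then $d_{\mathbb G,R_1}(([m],v,e),([n],w,f))\le d_{\mathbb G,R_2}(([m],v,e),([n],w,f))$; (c) if $C_2^p\le C_1^p-\frac12C_{\mathcal Y}^p$, then $d_{\mathbb G,R_1}(([m],v,e),([n],w,f))\ge d_{\mathbb G,R_2}(([m],v,e),([n],w,f))$; (d) if $C>0$ satisfies $C^p\ge C_i^p$ ($i\in\{1,2\}$), then $d_{\mathbb G,A}(([m],v,e),([n],w,f))\ge d_{\mathbb G,R_i}(([m],v,e),([n],w,f))$, where $d_{\mathbb G,A}$ uses penalty $C$ and the same order $p$.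
   Context: Let $(\mathcal X,d_{\mathcal X})$ and $(\mathcal Y,d_{\mathcal Y})$ be pseudometric spaces (symmetric, satisfying the triangle inequality, $d(z,z)=0$), with a distinguished element $y_0\in\mathcal Y$ meaning ''no edge''. For $n\in\mathbb N_0$ write $[n]=\{1,\dots,n\}$ ($[0]=\emptyset$) and $S_n$ for the set of permutations of $[n]$. An attributed simple graph is a triple $([n],v,e)$ with $v:[n]\to\mathcal X$ and $e:[n]^2\to\mathcal Y$ symmetric ($e(i,i')=e(i',i)$) with $e(i,i)=y_0$ for all $i$; write $v_i=v(i)$, $e_{ii'}=e(i,i')$. Two graphs $([n],v,e)$, $([n],w,f)$ are regarded as equal if there is $\pi\in S_n$ with $v_i=w_{\pi(i)}$ and $e_{ii'}=f_{\pi(i)\pi(i')}$ for all $i,i'\in[n]$; $\mathbb G$ denotes the set of such graphs. GTT distance: for $p\ge1$, $C>0$ and $([m],v,e),([n],w,f)\in\mathbb G$ with $m\le n$, $$d_{\mathbb G,A}(([m],v,e),([n],w,f))=\min_{I\subset[m],\,\pi\in S_n}\Big[(m+n-2|I|)C^p+\sum_{i\in I}d_{\mathcal X}(v_i,w_{\pi(i)})^p+\tfrac12\sum_{(i,i')\in I^2}d_{\mathcal Y}(e_{ii'},f_{\pi(i)\pi(i')})^p+\tfrac12\sum_{(i,i')\in[m]^2\setminus I^2}d_{\mathcal Y}(e_{ii'},y_0)^p+\tfrac12\sum_{(j,j')\in[n]^2\setminus\pi(I)^2}d_{\mathcal Y}(y_0,f_{jj'})^p\Big]^{1/p},$$ and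 for $m>n$ it is defined by swapping the two arguments. GOSPA distances: assume $\mathrm{diam}(\mathcal X)\le C_{\mathcal X}$, $\mathrm{diam}(\mathcal Y)\le C_{\mathcal Y}$, $p\ge1$. For $([m],v,e),([n],w,f)\in\mathbb G$ with $n\ge\max\{m,1\}$ (otherwise swap arguments; both distances are $0$ if $m=n=0$), using the convention $0/0:=0$: GOSPA1 (penalty $C_1^p\ge C_{\mathcal X}^p+\frac12C_{\mathcal Y}^p$): $$d_{\mathbb G,R_1}=\frac{1}{n^{1/p}}\min_{\pi\in S_n}\Big[(n-m)C_1^p+\sum_{i\in[m]}d_{\mathcal X}(v_i,w_{\pi(i)})^p+\frac12\frac1{n-1}\sum_{i\in[m]}\Big(\sum_{i'\in[m]}d_{\mathcal Y}(e_{ii'},f_{\pi(i)\pi(i')})^p+(n-m)C_{\mathcal Y}^p\Big)\Big]^{1/p};$$ GOSPA2 (penalty $C_2^p\ge C_{\mathcal X}^p+C_{\mathcal Y}^p$; for $p>1$ additionally requiring $d_{\mathcal Y}(y_1,y_2)\le\max\{d_{\mathcal Y}(y_1,y_0),d_{\mathcal Y}(y_0,y_2)\}$ for all $y_1,y_2$): $$d_{\mathbb G,R_2}=\frac{1}{n^{1/p}}\min_{\pi\in S_n}\Big[(n-m)C_2^p+\sum_{i\in[m]}d_{\mathcal X}(v_i,w_{\pi(i)})^p+\frac12\frac1{n-1}\Big(\sum_{(i,i')\in[m]^2}d_{\mathcal Y}(e_{ii'},f_{\pi(i)\pi(i')})^p+\sum_{(i,i')\in[n]^2\setminus[m]^2}d_{\mathcal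 Y}(y_0,f_{\pi(i)\pi(i')})^p\Big)\Big]^{1/p}.$$ *)

(* Defs.v *)
From HB Require Import structures.
From mathcomp Require Import all_boot all_order all_algebra all_fingroup.
From mathcomp Require Import all_classical all_reals all_analysis.
Set Implicit Arguments. Unset Strict Implicit. Unset Printing Implicit Defensive.
Import Order.TTheory GRing.Theory Num.Theory.
Local Open Scope ring_scope.

Lemma leqF_ge (m n : nat) : (m <= n)%N = false -> (n <= m)%N.
Proof. by move/negbT; rewrite -ltnNge; apply: ltnW. Qed.

Section GraphDist.
Variables (R : realType) (X Y : Type) (dX : X -> X -> R) (dY : Y -> Y -> R)
  (y0 : Y) (p : R).

Definition is_graph (n : nat) (e : 'I_n -> 'I_n -> Y) : Prop :=
  (forall i j, e i j = e j i) /\ (forall i, e i i = y0).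

Definition gtt_cost (C : R) (m n : nat) (H : (m <= n)%N)
  (v : 'I_m -> X) (e : 'I_m -> 'I_m -> Y) (w : 'I_n -> X) (f : 'I_n -> 'I_n -> Y)
  (I : {set 'I_m}) (s : 'S_n) : R :=
  let pi := fun i : 'I_m => s (widen_ord H i) in
  (m%:R + n%:R - 2 * #|I|%:R) * powR C p
  + \sum_(i in I) powR (dX (v i) (w (pi i))) p
  + 2^-1 * \sum_(i in I) \sum_(i' in I) powR (dY (e i i') (f (pi i) (pi i'))) p
  + 2^-1 * \sum_(i : 'I_m) \sum_(i' : 'I_m | ~~ ((i \in I) && (i' \in I)))
             powR (dY (e i i') y0) p
  + 2^-1 * \sum_(j : 'I_n) \sum_(j' : 'I_n | ~~ ((j \in pi @: I) && (j' \in pi @: I)))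
             powR (dY y0 (f j j')) p.

Definition gtt_le (C : R) (m n : nat) (H : (m <= n)%N)
  (v : 'I_m -> X) (e : 'I_m -> 'I_m -> Y) (w : 'I_n -> X) (f : 'I_n -> 'I_n -> Y) : R :=
  powR (\big[Num.min/gtt_cost C H v e w f finset.set0 1%g]_(x : {set 'I_m} * 'S_n)
          gtt_cost C H v e w f x.1 x.2) p^-1.

Definition dGA (C : R) (m n : nat)
  (v : 'I_m -> X) (e : 'I_m -> 'I_m -> Y) (w : 'I_n -> X) (f : 'I_n -> 'I_n -> Y) : R :=
  (if (m <= n)%N as b return (m <= n)%N = b -> R
   then fun H => gtt_le C H v e w f
   else fun H => gtt_le C (leqF_ge H) w f v e) (erefl (m <= n)%N).

Definition g1_cost (C1 CY : R) (m n : nat) (H : (m <= n)%N)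
  (v : 'I_m -> X) (e : 'I_m -> 'I_m -> Y) (w : 'I_n -> X) (f : 'I_n -> 'I_n -> Y)
  (s : 'S_n) : R :=
  let pi := fun i : 'I_m => s (widen_ord H i) in
  (n%:R - m%:R) * powR C1 p
  + \sum_(i : 'I_m) powR (dX (v i) (w (pi i))) p
  + 2^-1 * (n%:R - 1)^-1 *
      \sum_(i : 'I_m) (\sum_(i' : 'I_m) powR (dY (e i i') (f (pi i) (pi i'))) p
                       + (n%:R - m%:R) * powR CY p).

(* note: x / 0 = 0 in MathComp, which implements the convention 0/0 := 0 *)
Definition g1_le (C1 CY : R) (m n : nat) (H : (m <= n)%N)
  (v : 'I_m -> X) (e : 'I_m -> 'I_m -> Y) (w : 'I_n -> X) (f : 'I_n -> 'I_n -> Y) : R :=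
  if n == 0%N then 0 else
  (powR n%:R p^-1)^-1 *
  powR (\big[Num.min/g1_cost C1 CY H v e w f 1%g]_(s : 'S_n) g1_cost C1 CY H v e w f s) p^-1.

Definition dGR1 (C1 CY : R) (m n : nat)
  (v : 'I_m -> X) (e : 'I_m -> 'I_m -> Y) (w : 'I_n -> X) (f : 'I_n -> 'I_n -> Y) : R :=
  (if (m <= n)%N as b return (m <= n)%N = b -> R
   then fun H => g1_le C1 CY H v e w f
   else fun H => g1_le C1 CY (leqF_ge H) w f v e) (erefl (m <= n)%N).

Definition g2_cost (C2 : R) (m n : nat) (H : (m <= n)%N)
  (v : 'I_m -> X) (e : 'I_m -> 'I_m -> Y) (w : 'I_n -> X) (f : 'I_n -> 'I_n -> Y)
  (s : 'S_n) : R :=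
  let pi := fun i : 'I_m => s (widen_ord H i) in
  (n%:R - m%:R) * powR C2 p
  + \sum_(i : 'I_m) powR (dX (v i) (w (pi i))) p
  + 2^-1 * (n%:R - 1)^-1 *
      (\sum_(i : 'I_m) \sum_(i' : 'I_m) powR (dY (e i i') (f (pi i) (pi i'))) p
       + \sum_(j : 'I_n) \sum_(j' : 'I_n | ~~ ((j < m)%N && (j' < m)%N))
            powR (dY y0 (f (s j) (s j'))) p).

Definition g2_le (C2 : R) (m n : nat) (H : (m <= n)%N)
  (v : 'I_m -> X) (e : 'I_m -> 'I_m -> Y) (w : 'I_n -> X) (f : 'I_n -> 'I_n -> Y) : R :=
  if n == 0%N then 0 else
  (powR n%:R p^-1)^-1 *
  powR (\big[Num.min/g2_cost C2 H v e w f 1%g]_(s : 'S_n) g2_cost C2 H v e w f s) p^-1.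

Definition dGR2 (C2 : R) (m n : nat)
  (v : 'I_m -> X) (e : 'I_m -> 'I_m -> Y) (w : 'I_n -> X) (f : 'I_n -> 'I_n -> Y) : R :=
  (if (m <= n)%N as b return (m <= n)%N = b -> R
   then fun H => g2_le C2 H v e w f
   else fun H => g2_le C2 (leqF_ge H) w f v e) (erefl (m <= n)%N).

End GraphDist.

(* Main.v *)
Require Import Defs.
From HB Require Import structures.
From mathcomp Require Import all_boot all_order all_algebra all_fingroup.
From mathcomp Require Import all_classical all_reals all_analysis.
From mathcomp Require Import lra.
Import Order.TTheory GRing.Theory Num.Theory.
Local Open Scope ring_scope.

Module Aux8.
Set Implicit Arguments. Unset Strict Implicit. Unset Printing Implicit Defensive.

Lemma match_true (b : bool) (A : Type) (f : b = true -> A) (g : b = false -> A) (H : b = true) :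
  (if b as b' return b = b' -> A then f else g) (erefl b) = f H.
Proof. by destruct b => //; rewrite (eq_irrelevance H (erefl _)). Qed.
Lemma match_false (b : bool) (A : Type) (f : b = true -> A) (g : b = false -> A) (H : b = false) :
  (if b as b' return b = b' -> A then f else g) (erefl b) = g H.
Proof. by destruct b => //; rewrite (eq_irrelevance H (erefl _)). Qed.

Section Aux.
Variable R : realType.

Lemma mybigmin_le_seq (I : eqType) (r : seq I) (F : I -> R) x0 j :
  j \in r -> \big[Num.min/x0]_(i <- r) F i <= F j.
Proof.
elim: r => [//|a r IH]; rewrite in_cons big_cons => /orP[/eqP->|jr].
  by rewrite ge_min lexx.
by rewrite ge_min IH // orbT.
Qed.

Lemma mybigmin_le (I : finType) (F : I -> R) x0 j :
  \big[Num.min/x0]_(i : I) F i <= F j.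
Proof. by apply: mybigmin_le_seq; rewrite mem_index_enum. Qed.

Lemma mybigmin_ex (I : finType) (F : I -> R) i0 :
  exists j, \big[Num.min/F i0]_(i : I) F i = F j.
Proof.
apply: (big_ind (fun x => exists j, x = F j)); first by exists i0.
  move=> x y [j1 ->] [j2 ->]; case: (leP (F j1) (F j2)) => _.
    by exists j1. by exists j2.
by move=> i _; exists i.
Qed.

Lemma mybigmin_ge0 (I : finType) (F : I -> R) x0 :
  0 <= x0 -> (forall i, 0 <= F i) -> 0 <= \big[Num.min/x0]_(i : I) F i.
Proof.
move=> h0 hF; apply: (big_ind (fun x => 0 <= x)) => // x y hx hy.
by rewrite le_min hx hy.
Qed.

Lemma mybigmin_mono (I : finType) (F G : I -> R) x0 y0 i0 :
  y0 = G i0 -> (forall i, F i <= G i) ->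
  \big[Num.min/x0]_(i : I) F i <= \big[Num.min/y0]_(i : I) G i.
Proof.
move=> -> hFG; have [j ->] := mybigmin_ex G i0.
exact: le_trans (mybigmin_le F x0 j) (hFG j).
Qed.

Lemma sum_ltm (n m : nat) (c : R) : (m <= n)%N ->
  \sum_(j < n | (j < m)%N) c = m%:R * c.
Proof.
move=> H; rewrite (eq_bigl (fun j : 'I_n => predT j && (j < m)%N)) //.
rewrite (big_ord_narrow_cond H) (eq_bigl xpredT) //.
by rewrite sumr_const (card_ord m) mulr_natl.
Qed.

Lemma sum_gem (n m : nat) (c : R) : (m <= n)%N ->
  \sum_(j < n | ~~ (j < m)%N) c = (n%:R - m%:R) * c.
Proof.
move=> H.
have E : \sum_(j < n) c = \sum_(j < n | (j < m)%N) c + \sum_(j < n | ~~ (j < m)%N) c.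
  exact: bigID.
rewrite sumr_const card_ord sum_ltm // in E.
by rewrite mulrBl [n%:R * c]mulr_natl E addrC addKr.
Qed.

Lemma sum_neq (n : nat) (j : 'I_n) (c : R) :
  \sum_(j' < n | j' != j) c = (n%:R - 1) * c.
Proof.
have E : \sum_(j' < n) c = c + \sum_(j' < n | j' != j) c by exact: bigD1.
rewrite sumr_const card_ord in E.
by rewrite mulrBl [n%:R * c]mulr_natl E mul1r addrC addKr.
Qed.

Lemma inv_nm1_le1 (n : nat) : (n%:R - 1 : R)^-1 <= 1.
Proof.
case: n => [|[|n]]; first by rewrite sub0r invrN invr1; apply: (le_trans (lerN10 _)).
  by rewrite subrr invr0 ler01.
rewrite -natr1 addrK invf_le1 // ?ler1n // ltr0n //.
Qed.

Lemma inv_nm1_ge0 (n : nat) : (0 < n)%N -> 0 <= (n%:R - 1 : R)^-1.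
Proof. by move=> hn; rewrite invr_ge0 subr_ge0 ler1n. Qed.

Lemma inv_nm1_mul (n : nat) : (0 < n)%N -> (n%:R - 1 : R)^-1 * (n%:R - 1) <= 1.
Proof.
case: n => [//|[|n]] _; first by rewrite subrr mulr0 ler01.
by rewrite mulVf // -natr1 addrK pnatr_eq0.
Qed.

Lemma inv_nm1_mulm (n m : nat) : (m < n)%N -> (n%:R - 1 : R)^-1 * m%:R <= 1.
Proof.
case: m => [|m] h; first by rewrite mulr0 ler01.
have n1 : 0 < (n%:R - 1 : R) by rewrite subr_gt0 ltr1n (leq_ltn_trans _ h).
rewrite mulrC ler_pdivrMr // mul1r lerBrDr natr1 ler_nat //.
Qed.

End Aux.

Section Costs.
Variables (R : realType) (X Y : Type) (dX : X -> X -> R) (dY : Y -> Y -> R) (y0 : Y) (p CX CY : R).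

Lemma g1_g2_eq C1 C2 n (H : (n <= n)%N) v e w f s :
  g1_cost dX dY p C1 CY H v e w f s = g2_cost dX dY y0 p C2 H v e w f s.
Proof.
rewrite /g1_cost /g2_cost subrr !mul0r; congr (_ + _ * _).
rewrite [X in _ = _ + X]big1 ?addr0; first by apply: eq_bigr => i _; rewrite addr0.
move=> j _; rewrite big_pred0 // => j'; by rewrite !ltn_ord.
Qed.

Lemma g1_le_g2_cost C1 C2 m n (H : (m <= n)%N) v e w f s :
  (0 < n)%N -> powR C1 p <= powR C2 p - 2^-1 * powR CY p -> 0 <= CY ->
  g1_cost dX dY p C1 CY H v e w f s <= g2_cost dX dY y0 p C2 H v e w f s.
Proof.
move=> n0 hC hCY; rewrite /g1_cost /g2_cost.
rewrite big_split /= sumr_const card_ord -[(_ * _) *+ m]mulr_natl.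
set A := \sum_(i < m) _.
set B := \sum_(i < m) \sum_(i' < m) _.
set S2 := \sum_(j < n) _.
set K := (n%:R - 1 : R)^-1.
set D := (n%:R - m%:R : R).
have S2ge0 : 0 <= S2 by apply: sumr_ge0 => j _; apply: sumr_ge0 => j' _; apply: powR_ge0.
have K0 : 0 <= K by apply: inv_nm1_ge0.
have D0 : 0 <= D by rewrite subr_ge0 ler_nat.
have KS : 0 <= K * S2 by apply: mulr_ge0.
have CYp0 : 0 <= powR CY p by apply: powR_ge0.
have KM : K * (m%:R * (D * powR CY p)) <= D * powR CY p.
  case: (ltnP m n) => hmn; last first.
    have -> : D = 0 by rewrite /D (_ : m = n) ?subrr //; apply/eqP; rewrite eqn_leq H.
    by rewrite !(mul0r, mulr0).
  rewrite (mulrA K) -[X in _ <= X]mul1r; apply: ler_wpM2r; first exact: mulr_ge0.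
  exact: inv_nm1_mulm.
have DC : D * powR C1 p <= D * (powR C2 p - 2^-1 * powR CY p) by apply: ler_wpM2l.
lra.
Qed.

Hypothesis hp0 : 0 < p.
Hypothesis dY_ge0 : forall y y', 0 <= dY y y'.
Hypothesis dY_refl : forall y, dY y y = 0.
Hypothesis diamY : forall y y', dY y y' <= CY.

Lemma powY_le y y' : powR (dY y y') p <= powR CY p.
Proof.
apply: ge0_ler_powR; rewrite ?nnegrE ?(ltW hp0) ?dY_ge0 //.
exact: le_trans (dY_ge0 y y') (diamY y y').
Qed.

Lemma S2_bound m n (H : (m <= n)%N) (f : 'I_n -> 'I_n -> Y) (s : 'S_n) :
  (forall k, f k k = y0) ->
  \sum_(j < n) \sum_(j' < n | ~~ ((j < m)%N && (j' < m)%N)) powR (dY y0 (f (s j) (s j'))) p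
  <= (m%:R * (n%:R - m%:R) + (n%:R - m%:R) * (n%:R - 1)) * powR CY p.
Proof.
move=> hf.
have hb : forall j : 'I_n,
   \sum_(j' < n | ~~ ((j < m)%N && (j' < m)%N)) powR (dY y0 (f (s j) (s j'))) p
   <= (if (j < m)%N then (n%:R - m%:R) else (n%:R - 1)) * powR CY p.
  move=> j; case: (ltnP j m) => hj /=.
    rewrite -sum_gem //; apply: ler_sum => j' _; exact: powY_le.
  rewrite (bigD1 j) //= hf dY_refl powR0 ?gt_eqF // add0r -(sum_neq j).
  apply: ler_sum => j' _; exact: powY_le.
apply: le_trans (ler_sum _ (fun j _ => hb j)) _.
rewrite (bigID (fun j : 'I_n => (j < m)%N)) /=.
rewrite (eq_bigr (fun _ => (n%:R - m%:R) * powR CY p)); last by move=> j ->.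
rewrite [X in _ + X](eq_bigr (fun _ => (n%:R - 1) * powR CY p)); last by move=> j /negbTE ->.
rewrite sum_ltm // sum_gem //.
lra.
Qed.

Lemma g2_le_g1_cost C1 C2 m n (H : (m <= n)%N) v e w f s :
  (0 < n)%N -> powR C2 p <= powR C1 p - 2^-1 * powR CY p -> 0 <= CY ->
  (forall k, f k k = y0) ->
  g2_cost dX dY y0 p C2 H v e w f s <= g1_cost dX dY p C1 CY H v e w f s.
Proof.
move=> n0 hC hCY hf; rewrite /g1_cost /g2_cost.
rewrite big_split /= sumr_const card_ord -[(_ * _) *+ m]mulr_natl.
have hS := S2_bound H s hf.
set A := \sum_(i < m) _.
set B := \sum_(i < m) \sum_(i' < m) _.
set S2 := \sum_(j < n) _.
set K := (n%:R - 1 : R)^-1.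
set D := (n%:R - m%:R : R).
have K0 : 0 <= K by apply: inv_nm1_ge0.
have D0 : 0 <= D by rewrite subr_ge0 ler_nat.
have CYp0 : 0 <= powR CY p by apply: powR_ge0.
have KS : K * S2 <= K * ((m%:R * D + D * (n%:R - 1)) * powR CY p) by apply: ler_wpM2l.
have KN : (K * (n%:R - 1)) * (D * powR CY p) <= D * powR CY p.
  rewrite -[X in _ <= X]mul1r; apply: ler_wpM2r; first exact: mulr_ge0.
  exact: inv_nm1_mul.
have DC : D * powR C2 p <= D * (powR C1 p - 2^-1 * powR CY p) by apply: ler_wpM2l.
lra.
Qed.


Hypothesis hp1 : 1 <= p.
Hypothesis dY_tri : forall y y' y'', dY y y'' <= dY y y' + dY y' y''.
Hypothesis hY2 : 1 < p -> forall y1 y2, dY y1 y2 <= Num.max (dY y1 y0) (dY y0 y2).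

Lemma powY_tri y1 y2 : powR (dY y1 y2) p <= powR (dY y1 y0) p + powR (dY y0 y2) p.
Proof.
have P0 a : 0 <= powR a p by apply: powR_ge0.
case: (ltrP 1 p) => hp.
  have h := hY2 hp y1 y2.
  have hm : 0 <= p by apply: le_trans hp1; exact: ler01.
  have [hab|hab] := leP (dY y1 y0) (dY y0 y2).
    rewrite max_r // in h.
    apply: le_trans (ge0_ler_powR hm _ _ h) _; rewrite ?nnegrE ?dY_ge0 //.
    by rewrite lerDr.
  rewrite max_l ?(ltW hab) // in h.
  apply: le_trans (ge0_ler_powR hm _ _ h) _; rewrite ?nnegrE ?dY_ge0 //.
  by rewrite lerDl.
have -> : p = 1 by apply/eqP; rewrite eq_le hp hp1.
by rewrite !powRr1 ?dY_ge0.
Qed.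

Lemma edge_bound m n (H : (m <= n)%N) (e : 'I_m -> 'I_m -> Y) (f : 'I_n -> 'I_n -> Y)
  (I : {set 'I_m}) (s : 'S_n) :
  \sum_(i < m) \sum_(i' < m) powR (dY (e i i') (f (s (widen_ord H i)) (s (widen_ord H i')))) p
  + \sum_(j < n) \sum_(j' < n | ~~ ((j < m)%N && (j' < m)%N)) powR (dY y0 (f (s j) (s j'))) p
  <= \sum_(i in I) \sum_(i' in I) powR (dY (e i i') (f (s (widen_ord H i)) (s (widen_ord H i')))) p
  + \sum_(i : 'I_m) \sum_(i' : 'I_m | ~~ ((i \in I) && (i' \in I))) powR (dY (e i i') y0) p
  + \sum_(j : 'I_n) \sum_(j' : 'I_n | ~~ ((j \in (fun i => s (widen_ord H i)) @: I)
        && (j' \in (fun i => s (widen_ord H i)) @: I))) powR (dY y0 (f j j')) p.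
Proof.
set a := fun i i' => powR (dY (e i i') (f (s (widen_ord H i)) (s (widen_ord H i')))) p.
set G := fun j j' => powR (dY y0 (f (s j) (s j'))) p.
have winj : injective (widen_ord H) by move=> x y /(congr1 val) ?; exact: val_inj.
set W := widen_ord H @: I.
have WI i : (widen_ord H i \in W) = (i \in I) by rewrite mem_imset.
have Wm j : j \in W -> (j < m)%N by case/imsetP => i _ ->; rewrite /= ltn_ord.
have stepa : \sum_(i < m) \sum_(i' < m) a i i' =
   \sum_(i in I) \sum_(i' in I) a i i' +
   \sum_(i < m) \sum_(i' < m | ~~ ((i \in I) && (i' \in I))) a i i'.
  rewrite [X in _ = X + _]big_mkcond -big_split /=.
  apply: eq_bigr => i _; rewrite (bigID (fun i' => (i \in I) && (i' \in I))) /=.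
  case: (boolP (i \in I)) => iI; last by rewrite big_pred0.
  by congr (_ + _); apply: eq_bigl.
have stepb : \sum_(i < m) \sum_(i' < m | ~~ ((i \in I) && (i' \in I))) a i i' <=
   \sum_(i : 'I_m) \sum_(i' : 'I_m | ~~ ((i \in I) && (i' \in I))) powR (dY (e i i') y0) p
   + \sum_(i < m) \sum_(i' < m | ~~ ((i \in I) && (i' \in I))) G (widen_ord H i) (widen_ord H i').
  rewrite -big_split /=; apply: ler_sum => i _; rewrite -big_split /=.
  apply: ler_sum => i' _; exact: powY_tri.
have stepc : \sum_(i < m) \sum_(i' < m | ~~ ((i \in I) && (i' \in I))) G (widen_ord H i) (widen_ord H i')
   + \sum_(j < n) \sum_(j' < n | ~~ ((j < m)%N && (j' < m)%N)) G j j'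
   = \sum_(j : 'I_n) \sum_(j' : 'I_n | ~~ ((j \in (fun i => s (widen_ord H i)) @: I)
        && (j' \in (fun i => s (widen_ord H i)) @: I))) powR (dY y0 (f j j')) p.
  have hpi : (fun i => s (widen_ord H i)) @: I = s @: W by rewrite -imset_comp.
  have E3 : \sum_(j : 'I_n) \sum_(j' : 'I_n | ~~ ((j \in (fun i => s (widen_ord H i)) @: I)
        && (j' \in (fun i => s (widen_ord H i)) @: I))) powR (dY y0 (f j j')) p
     = \sum_(j < n) \sum_(j' < n | ~~ ((j \in W) && (j' \in W))) G j j'.
    rewrite hpi (reindex_inj (@perm_inj _ s)); apply: eq_bigr => j _.
    rewrite (reindex_inj (@perm_inj _ s)); apply: eq_bigl => j'.
    by rewrite !mem_imset //; exact: perm_inj.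
  rewrite E3.
  rewrite [RHS](eq_bigr (fun j => \sum_(j' < n | ~~ ((j \in W) && (j' \in W)) && ((j < m)%N && (j' < m)%N)) G j j'
     + \sum_(j' < n | ~~ ((j \in W) && (j' \in W)) && ~~ ((j < m)%N && (j' < m)%N)) G j j'));
    last by move=> j _; rewrite (bigID (fun j' : 'I_n => (j < m)%N && (j' < m)%N)).
  rewrite big_split /=; congr (_ + _).
    rewrite (bigID (fun j : 'I_n => (j < m)%N)) /=.
    rewrite [X in _ = _ + X]big1 ?addr0; last first.
      move=> j /negbTE hj; rewrite big_pred0 // => j'; by rewrite hj andbF.
    rewrite (eq_bigl (fun j : 'I_n => predT j && (j < m)%N)) // (big_ord_narrow_cond H).
    apply: eq_bigr => i _.
    rewrite (eq_bigl (fun j' : 'I_n => (~~ ((widen_ord H i \in W) && (j' \in W)) && (widen_ord H i < m)%N) && (j' < m)%N)); last first.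
      by move=> j'; rewrite andbA.
    rewrite (big_ord_narrow_cond H); apply: eq_bigl => i'.
    by rewrite !WI /= ltn_ord andbT.
  apply: eq_bigr => j _; apply: eq_bigl => j'.
  case h: ((j < m)%N && (j' < m)%N) => /=; first by rewrite andbF.
  rewrite andbT; apply/esym/negP => /andP[/Wm hj /Wm hj']; by rewrite hj hj' in h.
rewrite stepa; move: stepb stepc; rewrite /a /G /= => stepb stepc.
rewrite -stepc; lra.
Qed.


Hypothesis dX_ge0 : forall x x', 0 <= dX x x'.
Hypothesis diamX : forall x x', dX x x' <= CX.

Lemma powX_le x x' : powR (dX x x') p <= powR CX p.
Proof.
apply: ge0_ler_powR; rewrite ?nnegrE ?(ltW hp0) ?dX_ge0 //.
exact: le_trans (dX_ge0 x x') (diamX x x').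
Qed.

Lemma node_bound C Cg m n (H : (m <= n)%N) (v : 'I_m -> X) (w : 'I_n -> X) (I : {set 'I_m}) (s : 'S_n) :
  powR CX p <= powR Cg p -> powR Cg p <= powR C p ->
  (n%:R - m%:R) * powR Cg p + \sum_(i < m) powR (dX (v i) (w (s (widen_ord H i)))) p
  <= (m%:R + n%:R - 2 * #|I|%:R) * powR C p + \sum_(i in I) powR (dX (v i) (w (s (widen_ord H i)))) p.
Proof.
move=> hXg hgC.
rewrite (bigID (fun i => i \in I)) /=.
have hc : \sum_(i < m | i \notin I) powR (dX (v i) (w (s (widen_ord H i)))) p
   <= (m%:R - #|I|%:R) * powR CX p.
  apply: le_trans (ler_sum _ (fun i _ => powX_le (v i) (w (s (widen_ord H i))))) _.
  have E : \sum_(i < m) powR CX p = \sum_(i in I) powR CX p + \sum_(i < m | i \notin I) powR CX p.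
    exact: bigID.
  rewrite sumr_const card_ord sumr_const in E.
  rewrite -![powR CX p *+ _]mulr_natl in E. lra.
have kI : (#|I| <= m)%N by rewrite -[X in (_ <= X)%N](card_ord m) max_card.
have k0 : 0 <= (m%:R - #|I|%:R : R) by rewrite subr_ge0 ler_nat.
have D0 : 0 <= (n%:R - m%:R : R) by rewrite subr_ge0 ler_nat.
have h1 : (n%:R - m%:R) * powR Cg p <= (n%:R - m%:R) * powR C p by apply: ler_wpM2l.
have h2 : (m%:R - #|I|%:R) * powR CX p <= (m%:R - #|I|%:R) * powR C p.
  by apply: ler_wpM2l => //; apply: le_trans hgC.
have h3 : 0 <= (m%:R - #|I|%:R) * powR C p by apply: mulr_ge0 => //; apply: powR_ge0.
lra.
Qed.

Lemma gtt_ge0 C m n (H : (m <= n)%N) v e w f I s :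
  gtt_cost dX dY y0 p C H v e w f I s >= 0.
Proof.
rewrite /gtt_cost /=.
have kI : (#|I| <= m)%N by rewrite -[X in (_ <= X)%N](card_ord m) max_card.
have h0 : 0 <= (m%:R + n%:R - 2 * #|I|%:R : R).
  have : (#|I|%:R <= m%:R :> R) by rewrite ler_nat.
  have : (m%:R <= n%:R :> R) by rewrite ler_nat.
  lra.
have P0 a : 0 <= powR a p by apply: powR_ge0.
repeat apply: addr_ge0; try apply: mulr_ge0 => //;
  repeat (apply: sumr_ge0 => ? _) => //.
Qed.

Lemma g2_le_gtt C C2 m n (H : (m <= n)%N) v e w f I s :
  (0 < n)%N -> powR CX p <= powR C2 p -> powR C2 p <= powR C p ->
  g2_cost dX dY y0 p C2 H v e w f s <= gtt_cost dX dY y0 p C H v e w f I s.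
Proof.
move=> n0 hX hC; rewrite /g2_cost /gtt_cost /=.
have hN := node_bound H v w I s hX hC.
have hE := edge_bound H e f I s.
set B := \sum_(i < m) \sum_(i' < m) _ in hE *.
set S2 := \sum_(j < n) \sum_(j' < n | _) _ in hE *.
set K := (n%:R - 1 : R)^-1.
have P0 a : 0 <= powR a p by apply: powR_ge0.
have BS : 0 <= B + S2 by apply: addr_ge0; repeat (apply: sumr_ge0 => ? _) => //.
have KB : K * (B + S2) <= B + S2.
  rewrite -[X in _ <= X]mul1r; apply: ler_wpM2r => //; exact: inv_nm1_le1.
lra.
Qed.

Lemma gtt_lower C m n (H : (m <= n)%N) (v : 'I_m -> X) e (w : 'I_n -> X) f (I : {set 'I_m}) (s : 'S_n) :
  (m%:R + n%:R - 2 * #|I|%:R) * powR C p + \sum_(i in I) powR (dX (v i) (w (s (widen_ord H i)))) p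
  + 2^-1 * (\sum_(i < m) \sum_(i' < m) powR (dY (e i i') (f (s (widen_ord H i)) (s (widen_ord H i')))) p
           + \sum_(j < n) \sum_(j' < n | ~~ ((j < m)%N && (j' < m)%N)) powR (dY y0 (f (s j) (s j'))) p)
  <= gtt_cost dX dY y0 p C H v e w f I s.
Proof. rewrite /gtt_cost /=; have := edge_bound H e f I s; lra. Qed.

Lemma g1_le_gtt C C1 m n (H : (m <= n)%N) (v : 'I_m -> X) e (w : 'I_n -> X) f (I : {set 'I_m}) (s : 'S_n) :
  (0 < n)%N -> powR CX p + 2^-1 * powR CY p <= powR C1 p -> powR C1 p <= powR C p ->
  g1_cost dX dY p C1 CY H v e w f s <= n%:R * gtt_cost dX dY y0 p C H v e w f I s.
Proof.
move=> n0 hX hC.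
have P0 a : 0 <= powR a p by apply: powR_ge0.
have hX' : powR CX p <= powR C1 p by have := P0 CY; lra.
have hN := node_bound H v w I s hX' hC.
have hlow := gtt_lower C H v e w f I s.
have T0 := gtt_ge0 C H v e w f I s.
set T := gtt_cost dX dY y0 p C H v e w f I s in hlow T0 *.
rewrite /g1_cost /=.
rewrite big_split /= sumr_const card_ord -[(_ * _) *+ m]mulr_natl.
set A := \sum_(i < m) powR (dX _ _) p in hN *.
set AI := \sum_(i in I) _ in hN hlow.
set B := \sum_(i < m) \sum_(i' < m) _ in hlow *.
set S2 := \sum_(j < n) \sum_(j' < n | _) _ in hlow.
set K := (n%:R - 1 : R)^-1.
set D := (n%:R - m%:R : R) in hN *.
have B0 : 0 <= B by repeat (apply: sumr_ge0 => ? _) => //.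
have S0 : 0 <= S2 by repeat (apply: sumr_ge0 => ? _) => //.
have AI0 : 0 <= AI by repeat (apply: sumr_ge0 => ? _) => //.
have K0 : 0 <= K by apply: inv_nm1_ge0.
have D0 : 0 <= D by rewrite subr_ge0 ler_nat.
have KB : K * B <= B.
  rewrite -[X in _ <= X]mul1r; apply: ler_wpM2r => //; exact: inv_nm1_le1.
have KM : K * (m%:R * (D * powR CY p)) <= D * powR CY p.
  case: (ltnP m n) => hmn; last first.
    have -> : D = 0 by rewrite /D (_ : m = n) ?subrr //; apply/eqP; rewrite eqn_leq H.
    by rewrite !(mul0r, mulr0).
  rewrite (mulrA K) -[X in _ <= X]mul1r; apply: ler_wpM2r; first exact: mulr_ge0.
  exact: inv_nm1_mulm.
have hCY1 : D * (2^-1 * powR CY p) <= D * powR C1 p by apply: ler_wpM2l => //; have := P0 CX; lra.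
have h1 : D * powR C1 p <= D * powR C p by apply: ler_wpM2l.
have kI : (#|I| <= m)%N by rewrite -[X in (_ <= X)%N](card_ord m) max_card.
have h3 : 0 <= (m%:R - #|I|%:R) * powR C p by apply: mulr_ge0 => //; rewrite subr_ge0 ler_nat.
have hD : D * powR C p <= (m%:R + n%:R - 2 * #|I|%:R) * powR C p by rewrite /D; lra.
have [n1|n2] : n = 1%N \/ (2 <= n)%N.
  by clear -n0; case: n n0 => [//|[|n]] _; [left|right].
  have K00 : K = 0 by rewrite /K n1 subrr invr0.
  have KM0 : K * (m%:R * (D * powR CY p)) = 0 by rewrite K00 mul0r.
  have nT : n%:R * T = T by rewrite n1 mul1r.
  lra.
have h2 : 2 * T <= n%:R * T by apply: ler_wpM2r => //; rewrite ler_nat.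
lra.
Qed.

End Costs.

Section Le.
Variables (R : realType) (X Y : Type) (dX : X -> X -> R) (dY : Y -> Y -> R) (y0 : Y) (p CX CY : R).
Hypothesis hp0 : 0 < p.

Lemma fin_le n a b : (0 < n)%N -> 0 <= a -> 0 <= b -> a <= n%:R * b ->
  (powR n%:R p^-1)^-1 * powR a p^-1 <= powR b p^-1.
Proof.
move=> n0 a0 b0 ab.
have q0 : 0 <= p^-1 by rewrite invr_ge0 ltW.
have np : 0 < powR (n%:R : R) p^-1 by apply: powR_gt0; rewrite ltr0n.
rewrite mulrC ler_pdivrMr // mulrC -powRM ?ler0n //.
by apply: ge0_ler_powR; rewrite ?nnegrE // mulr_ge0 ?ler0n.
Qed.

Lemma gle_mono (I : finType) (F G : I -> R) i0 (c : R) :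
  (forall i, 0 <= F i) -> (forall i, F i <= G i) -> 0 <= c ->
  c * powR (\big[Num.min/F i0]_i F i) p^-1 <= c * powR (\big[Num.min/G i0]_i G i) p^-1.
Proof.
move=> F0 FG c0; apply: ler_wpM2l => //.
have q0 : 0 <= p^-1 by rewrite invr_ge0 ltW.
apply: ge0_ler_powR; rewrite ?nnegrE //.
- by apply: mybigmin_ge0.
- by apply: mybigmin_ge0 => [|i]; apply: le_trans (F0 _) (FG _).
- exact: mybigmin_mono.
Qed.

Lemma g1_ge0 C1 m n (H : (m <= n)%N) v e w f s : (0 < n)%N ->
  0 <= g1_cost dX dY p C1 CY H v e w f s.
Proof.
move=> n0; rewrite /g1_cost /=.
have P0 a : 0 <= powR a p by apply: powR_ge0.
have K0 := inv_nm1_ge0 R n0.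
have D0 : 0 <= (n%:R - m%:R : R) by rewrite subr_ge0 ler_nat.
apply: addr_ge0; first apply: addr_ge0.
- by apply: mulr_ge0.
- by apply: sumr_ge0 => ? _.
- apply: mulr_ge0; first by apply: mulr_ge0.
  apply: sumr_ge0 => ? _; apply: addr_ge0; last exact: mulr_ge0.
  by apply: sumr_ge0 => ? _.
Qed.

Lemma g2_ge0 C2 m n (H : (m <= n)%N) v e w f s : (0 < n)%N ->
  0 <= g2_cost dX dY y0 p C2 H v e w f s.
Proof.
move=> n0; rewrite /g2_cost /=.
have P0 a : 0 <= powR a p by apply: powR_ge0.
have K0 := inv_nm1_ge0 R n0.
have D0 : 0 <= (n%:R - m%:R : R) by rewrite subr_ge0 ler_nat.
apply: addr_ge0; first apply: addr_ge0.
- by apply: mulr_ge0.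
- by apply: sumr_ge0 => ? _.
- apply: mulr_ge0; first by apply: mulr_ge0.
  by apply: addr_ge0; repeat (apply: sumr_ge0 => ? _).
Qed.

End Le.

End Aux8.
Import Aux8.

Theorem mainTheorem8 (R : realType) (X Y : Type)
  (dX : X -> X -> R) (dY : Y -> Y -> R) (y0 : Y) (p CX CY C1 C2 : R)
  (dX_refl : forall x, dX x x = 0)
  (dX_sym : forall x x', dX x x' = dX x' x)
  (dX_tri : forall x x' x'', dX x x'' <= dX x x' + dX x' x'')
  (dY_refl : forall y, dY y y = 0)
  (dY_sym : forall y y', dY y y' = dY y' y)
  (dY_tri : forall y y' y'', dY y y'' <= dY y y' + dY y' y'')
  (hp : 1 <= p)
  (hCX : 0 <= CX) (hCY : 0 <= CY)
  (diamX : forall x x', dX x x' <= CX)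
  (diamY : forall y y', dY y y' <= CY)
  (hC1 : 0 <= C1) (hC1p : powR CX p + 2^-1 * powR CY p <= powR C1 p)
  (hC2 : 0 <= C2) (hC2p : powR CX p + powR CY p <= powR C2 p)
  (hY2 : 1 < p -> forall y1 y2, dY y1 y2 <= Num.max (dY y1 y0) (dY y0 y2)) :
  (* (a) *)
  (forall (n : nat) (v : 'I_n -> X) (e : 'I_n -> 'I_n -> Y)
          (w : 'I_n -> X) (f : 'I_n -> 'I_n -> Y),
     is_graph y0 e -> is_graph y0 f ->
     dGR1 dX dY p C1 CY v e w f = dGR2 dX dY y0 p C2 v e w f)
  (* (b) *)
  /\ (powR C1 p <= powR C2 p - 2^-1 * powR CY p ->
      forall (m n : nat) (v : 'I_m -> X) (e : 'I_m -> 'I_m -> Y)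
             (w : 'I_n -> X) (f : 'I_n -> 'I_n -> Y),
        is_graph y0 e -> is_graph y0 f ->
        dGR1 dX dY p C1 CY v e w f <= dGR2 dX dY y0 p C2 v e w f)
  (* (c) *)
  /\ (powR C2 p <= powR C1 p - 2^-1 * powR CY p ->
      forall (m n : nat) (v : 'I_m -> X) (e : 'I_m -> 'I_m -> Y)
             (w : 'I_n -> X) (f : 'I_n -> 'I_n -> Y),
        is_graph y0 e -> is_graph y0 f ->
        dGR2 dX dY y0 p C2 v e w f <= dGR1 dX dY p C1 CY v e w f)
  (* (d) *)
  /\ (forall C : R, 0 < C ->
      forall (m n : nat) (v : 'I_m -> X) (e : 'I_m -> 'I_m -> Y)
             (w : 'I_n -> X) (f : 'I_n -> 'I_n -> Y),
        is_graph y0 e -> is_graph y0 f ->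
        (powR C1 p <= powR C p -> dGR1 dX dY p C1 CY v e w f <= dGA dX dY y0 p C v e w f)
        /\ (powR C2 p <= powR C p -> dGR2 dX dY y0 p C2 v e w f <= dGA dX dY y0 p C v e w f)).
Proof.
have hp0 : 0 < p by apply: lt_le_trans hp; exact: ltr01.
have dY_ge0 y y' : 0 <= dY y y'.
  by have := dY_tri y y' y; rewrite dY_refl (dY_sym y' y); lra.
have dX_ge0 x x' : 0 <= dX x x'.
  by have := dX_tri x x' x; rewrite dX_refl (dX_sym x' x); lra.
have P0 a : 0 <= powR a p by apply: powR_ge0.
have Lb m n (H : (m <= n)%N) v e w f :
    powR C1 p <= powR C2 p - 2^-1 * powR CY p ->
    g1_le dX dY p C1 CY H v e w f <= g2_le dX dY y0 p C2 H v e w f.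
  move=> hC; rewrite /g1_le /g2_le; case: ifP => [_|/negbT]; first by rewrite lexx.
  rewrite -lt0n => n0; apply: gle_mono => //.
  - by move=> s; apply: g1_ge0.
  - by move=> s; apply: g1_le_g2_cost.
have Lc m n (H : (m <= n)%N) v e w f :
    powR C2 p <= powR C1 p - 2^-1 * powR CY p -> (forall k, f k k = y0) ->
    g2_le dX dY y0 p C2 H v e w f <= g1_le dX dY p C1 CY H v e w f.
  move=> hC hf; rewrite /g1_le /g2_le; case: ifP => [_|/negbT]; first by rewrite lexx.
  rewrite -lt0n => n0; apply: gle_mono => //.
  - by move=> s; apply: g2_ge0.
  - by move=> s; apply: g2_le_g1_cost.
have Ld1 C m n (H : (m <= n)%N) v e w f : powR C1 p <= powR C p ->
    g1_le dX dY p C1 CY H v e w f <= gtt_le dX dY y0 p C H v e w f.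
  move=> hC; rewrite /g1_le /gtt_le; case: ifP => [_|/negbT]; first by rewrite powR_ge0.
  rewrite -lt0n => n0.
  have [[I s] E] := mybigmin_ex (fun x : {set 'I_m} * 'S_n => gtt_cost dX dY y0 p C H v e w f x.1 x.2) (finset.set0, 1%g).
  rewrite /= in E; rewrite E.
  apply: fin_le => //.
  - by apply: mybigmin_ge0 => [|s']; apply: g1_ge0.
  - exact: gtt_ge0.
  - apply: le_trans (mybigmin_le _ _ s) _.
    exact: (g1_le_gtt hp0 dY_ge0 hp dY_tri hY2 dX_ge0 diamX H v e w f I s n0 hC1p hC).
have Ld2 C m n (H : (m <= n)%N) v e w f : powR C2 p <= powR C p ->
    g2_le dX dY y0 p C2 H v e w f <= gtt_le dX dY y0 p C H v e w f.
  move=> hC; rewrite /g2_le /gtt_le; case: ifP => [_|/negbT]; first by rewrite powR_ge0.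
  rewrite -lt0n => n0.
  have [[I s] E] := mybigmin_ex (fun x : {set 'I_m} * 'S_n => gtt_cost dX dY y0 p C H v e w f x.1 x.2) (finset.set0, 1%g).
  rewrite /= in E; rewrite E.
  have hX : powR CX p <= powR C2 p by have := P0 CY; lra.
  apply: fin_le => //.
  - by apply: mybigmin_ge0 => [|s']; apply: g2_ge0.
  - exact: gtt_ge0.
  - apply: le_trans (mybigmin_le _ _ s) _.
    apply: le_trans (g2_le_gtt hp0 dY_ge0 hp dY_tri hY2 dX_ge0 diamX H v e w f I s n0 hX hC) _.
    by apply: ler_peMl; [apply: gtt_ge0 | rewrite ler1n].
split.
  move=> n v e w f _ _.
  rewrite /dGR1 /dGR2 (@match_true _ _ _ _ (leqnn n)) (@match_true _ _ _ _ (leqnn n)) /g1_le /g2_le.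
  have E : g1_cost dX dY p C1 CY (leqnn n) v e w f = g2_cost dX dY y0 p C2 (leqnn n) v e w f.
    by apply: funext => s; exact: g1_g2_eq.
  by rewrite E.
split.
  move=> hC m n v e w f ge gf; case: (leqP m n) => H.
    rewrite /dGR1 /dGR2 (@match_true _ _ _ _ H) (@match_true _ _ _ _ H); exact: Lb.
  have H' : (m <= n)%N = false by rewrite leqNgt H.
  rewrite /dGR1 /dGR2 (@match_false _ _ _ _ H') (@match_false _ _ _ _ H'); exact: Lb.
split.
  move=> hC m n v e w f ge gf; case: (leqP m n) => H.
    rewrite /dGR1 /dGR2 (@match_true _ _ _ _ H) (@match_true _ _ _ _ H); exact: Lc gf.2.
  have H' : (m <= n)%N = false by rewrite leqNgt H.
  rewrite /dGR1 /dGR2 (@match_false _ _ _ _ H') (@match_false _ _ _ _ H'); exact: Lc ge.2.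
move=> C C0 m n v e w f ge gf; case: (leqP m n) => H.
  rewrite /dGR1 /dGR2 /dGA (@match_true _ _ _ _ H) (@match_true _ _ _ _ H) (@match_true _ _ _ _ H).
  by split => hC; [exact: Ld1 | exact: Ld2].
have H' : (m <= n)%N = false by rewrite leqNgt H.
rewrite /dGR1 /dGR2 /dGA (@match_false _ _ _ _ H') (@match_false _ _ _ _ H') (@match_false _ _ _ _ H').
by split => hC; [exact: Ld1 | exact: Ld2].
Qed.
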